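(* Let $N\ge2$ and $(x,y)\in\mathbb{C}^N\times\mathbb{C}^{N-1}$. Then $(x,y)\in\mathbb{G}_{1,N}$ if and only if for every $w\in\overline{\mathbb{D}}$ one has $1-wx_1\neq0$ and \[ \left(\frac{y_1-wx_2}{1-wx_1},\dots,\frac{y_{N-1}-wx_N}{1-wx_1}\right)\in\mathbb{G}_{N-1}. \] In particular, if $(x,y)\in\mathbb{G}_{1,N}$ then $(y_1,\dots,y_{N-1})\in\mathbb{G}_{N-1}$ and $|y_1|<N-1$.
   Context: $\mathbb{D}$ is the open unit disc. $P_N(z;x):=\sum_{j=0}^{N-1}(-1)^jx_{j+1}z^j$, $Q_N(z;y):=1+\sum_{j=1}^{N-1}(-1)^jy_jz^j$, and $\mathbb{G}_{1,N}:=\{(x,y)\in\mathbb{C}^N\times\mathbb{C}^{N-1}: \text{the zero set of }(z,w)\mapsto Q_N(z;y)-wP_N(z;x)\text{ does not meet }\overline{\mathbb{D}}^2\}$. The symmetrized polydisc is $\mathbb{G}_m:=\{(s_1,\dots,s_m)\in\mathbb{C}^m: \text{all roots of } z^m+\sum_{j=1}^m(-1)^js_jz^{m-j}\text{ lie in }\mathbb{D}\}$. *)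

(* Defs.v *)
(* Complex numbers are modelled by an arbitrary
   numClosedFieldType C (e.g. algC). *)
From HB Require Import structures.
From mathcomp Require Import all_boot all_order all_algebra.
Set Implicit Arguments. Unset Strict Implicit. Unset Printing Implicit Defensive.
Import Order.TTheory GRing.Theory Num.Theory.
Local Open Scope ring_scope.

(* Tuples are 0-based: the paper's x_k is x`_(k-1). *)

Definition P_N (C : numClosedFieldType) (N : nat) (x : N.-tuple C) (z : C) : C :=
  \sum_(j < N) (-1) ^+ j * x`_j * z ^+ j.

Definition Q_N (C : numClosedFieldType) (N : nat) (y : N.-1.-tuple C) (z : C) : C :=
  1 + \sum_(j < N.-1) (-1) ^+ j.+1 * y`_j * z ^+ j.+1.

Definition G1N (C : numClosedFieldType) (N : nat) (x : N.-tuple C) (y : N.-1.-tuple C) : Prop :=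
  forall z w : C, `|z| <= 1 -> `|w| <= 1 -> Q_N y z - w * P_N x z != 0.

Definition symm_poly (C : numClosedFieldType) (m : nat) (s : m.-tuple C) : {poly C} :=
  'X^m + \sum_(j < m) ((-1) ^+ j.+1 * s`_j)%:P * 'X^(m - j.+1).

Definition Gsym (C : numClosedFieldType) (m : nat) (s : m.-tuple C) : Prop :=
  forall z : C, root (symm_poly s) z -> `|z| < 1.

(* Main.v *)
Require Import Defs.
From HB Require Import structures.
From mathcomp Require Import all_boot all_order all_algebra.
From mathcomp Require Import zify ring.
Import Order.TTheory GRing.Theory Num.Theory.
Local Open Scope ring_scope.
Set Implicit Arguments.

Section K.
Variable C : numClosedFieldType.
Definition hh (m : nat) (s : m.-tuple C) (z : C) : C :=
  1 + \sum_(j < m) (-1) ^+ j.+1 * s`_j * z ^+ j.+1.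

Lemma symm_horner m (s : m.-tuple C) t : t != 0 ->
  (symm_poly s).[t] = t ^+ m * hh s t^-1.
Proof.
move=> t0; rewrite /symm_poly /hh hornerD horner_sum hornerXn mulrDr mulr1.
congr (_ + _); rewrite mulr_sumr; apply: eq_bigr => j _.
rewrite hornerCM hornerXn exprB ?unitfE // ?ltn_ord // exprVn.
by rewrite mulrCA mulrA.
Qed.

Lemma hh0 m (s : m.-tuple C) : hh s 0 = 1.
Proof.
rewrite /hh big1 ?addr0 // => j _; by rewrite expr0n /= mulr0.
Qed.

Lemma key m (s : m.-tuple C) (c : C) (g : C -> C) : c != 0 ->
  (forall z, g z = c * hh s z) ->
  (forall z, `|z| <= 1 -> g z != 0) <-> Gsym s.
Proof.
move=> c0 hg; split.
- move=> H t rt; rewrite real_ltNge ?normr_real ?real1 //; apply/negP => t1.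
  have t0 : t != 0 by apply: contraTneq t1 => ->; rewrite normr0 ler10.
  have := H t^-1; rewrite normfV invr_le1 ?unitfE ?normr_gt0 ?normr_eq0 //.
  move=> /(_ t1); rewrite hg mulf_eq0 (negbTE c0) /=.
  move: rt; rewrite /root symm_horner // mulf_eq0 expf_eq0 (negbTE t0) andbF /=.
  by move=> ->.
- move=> H z z1; rewrite hg mulf_neq0 //; apply/negP => hz.
  have z0 : z != 0 by apply: contraTneq hz => ->; rewrite hh0 oner_eq0.
  have := H z^-1; rewrite /root symm_horner ?invr_eq0 // invrK (eqP hz) mulr0 eqxx.
  move=> /(_ isT); rewrite normfV invf_lt1 ?normr_gt0 //.
  by rewrite real_ltNge ?normr_real ?real1 // z1.
Qed.
Lemma symm_coef m (s : m.-tuple C) i :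
  (symm_poly s)`_i = (i == m)%N%:R +
     \sum_(j < m) (-1) ^+ j.+1 * s`_j * (i == m - j.+1)%N%:R.
Proof.
rewrite /symm_poly coefD coefXn coef_sum; congr (_ + _).
by apply: eq_bigr => j _; rewrite coefCM coefXn.
Qed.

Lemma symm_size m (s : m.-tuple C) : size (symm_poly s) = m.+1.
Proof.
apply/eqP; rewrite eqn_leq; apply/andP; split.
  apply/leq_sizeP => i hi; rewrite symm_coef.
  rewrite (_ : (i == m) = false); last by apply/negbTE; rewrite neq_ltn hi orbT.
  rewrite add0r big1 // => j _.
  rewrite (_ : (i == m - j.+1)%N = false) ?mulr0 //.
  apply/negbTE; rewrite neq_ltn; apply/orP; right.
  have := ltn_ord j; lia.
rewrite ltnNge; apply/negP => /leq_sizeP /(_ m (leqnn m)) /eqP.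
rewrite symm_coef eqxx big1 ?addr0 ?oner_eq0 // => j _.
rewrite (_ : (m == m - j.+1)%N = false) ?mulr0 //.
apply/negbTE; rewrite neq_ltn; apply/orP; right.
have := ltn_ord j; lia.
Qed.

Lemma symm_lead m (s : m.-tuple C) : lead_coef (symm_poly s) = 1.
Proof.
rewrite lead_coefE symm_size /= symm_coef eqxx big1 ?addr0 // => j _.
rewrite (_ : (m == m - j.+1)%N = false) ?mulr0 //.
apply/negbTE; rewrite neq_ltn; apply/orP; right.
have := ltn_ord j; lia.
Qed.

Lemma symm_coef1 m (s : m.+1.-tuple C) : (symm_poly s)`_m = - s`_0.
Proof.
rewrite symm_coef (_ : (m == m.+1) = false); last by apply/negbTE; rewrite neq_ltn ltnSn.
rewrite add0r big_ord_recl /= subSS subn0 eqxx mulr1 expr1 mulN1r.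
rewrite big1 ?addr0 // => j _.
rewrite (_ : (m == m.+1 - (bump 0 j).+1)%N = false) ?mulr0 //.
apply/negbTE; rewrite neq_ltn; apply/orP; right.
rewrite /bump /=; have := ltn_ord j; lia.
Qed.

Lemma sum_norm_lt (r : seq C) : (forall z, z \in r -> `|z| < 1) ->
  \sum_(z <- r) `|z| <= (size r)%:R /\ (r != [::] -> \sum_(z <- r) `|z| < (size r)%:R).
Proof.
elim: r => [|a r IH] H; first by rewrite big_nil lexx.
have [h1 _] := IH (fun z hz => H z (mem_behead (s := a :: r) hz)).
have ha := H a (mem_head _ _).
rewrite big_cons /= -add1n natrD; split => [|_].
  by apply: lerD => //; apply: ltW.
by apply: ltr_leD.
Qed.

Lemma ident m (x : m.+2.-tuple C) (y : m.+1.-tuple C) w z :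
  1 - w * x`_0 != 0 ->
  @Q_N C m.+2 y z - w * P_N x z =
  (1 - w * x`_0) * (1 + \sum_(j < m.+1) (-1) ^+ j.+1 *
     [tuple (y`_j - w * x`_(j.+1)) / (1 - w * x`_0) | j < m.+1]`_j * z ^+ j.+1).
Proof.
move=> c0; rewrite /Q_N /P_N (big_ord_recl m.+1).
have E : (1 - w * x`_0) * \sum_(i < m.+1) ((-1) ^+ i.+1 *
     [tuple (y`_j - w * x`_(j.+1)) / (1 - w * x`_0) | j < m.+1]`_i * z ^+ i.+1)
   = \sum_(i < m.+1) (-1) ^+ i.+1 * y`_i * z ^+ i.+1
     - w * \sum_(i < m.+1) (-1) ^+ (lift ord0 i) * x`_(lift ord0 i) * z ^+ (lift ord0 i).
  rewrite mulr_sumr mulr_sumr -sumrB; apply: eq_bigr => i _.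
  rewrite nth_mktuple lift0.
  field; done.
rewrite [RHS]mulrDr [in RHS]mulr1 E.
rewrite (_ : nat_of_ord (@ord0 m.+1) = 0%N) // expr0 !mulr1 mul1r.
change (m.+2.-1) with m.+1.
ring.
Qed.

Lemma gsym_bound m (s : m.+1.-tuple C) : Gsym s -> `|s`_0| < (m.+1)%:R.
Proof.
move=> H.
have [r Dp] := closed_field_poly_normal (symm_poly s).
rewrite symm_lead scale1r in Dp.
have hsz : size r = m.+1.
  by have := symm_size s; rewrite Dp size_prod_XsubC => -[].
have hr : forall z, z \in r -> `|z| < 1.
  by move=> z hz; apply: H; rewrite Dp root_prod_XsubC.
have hc : (\prod_(z <- r) ('X - z%:P))`_((size r).-1) = - s`_0.
  by rewrite hsz /= -Dp symm_coef1.
rewrite coefPn_prod_XsubC ?hsz // in hc.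
rewrite -(oppr_inj hc); apply: le_lt_trans (ler_norm_sum _ _ _) _.
rewrite -hsz; have [_ h2] := @sum_norm_lt r hr; apply: h2.
by apply/eqP => r0; rewrite r0 in hsz.
Qed.
Lemma Q0 N (y : N.-1.-tuple C) : @Q_N C N y 0 = 1.
Proof. by rewrite /Q_N big1 ?addr0 // => j _; rewrite expr0n /= mulr0. Qed.

Lemma P0 N (x : N.+1.-tuple C) : P_N x 0 = x`_0.
Proof.
rewrite /P_N big_ord_recl big1 ?addr0; first by rewrite /= !expr0 !mulr1 mul1r.
by move=> j _; rewrite expr0n /= mulr0.
Qed.
End K.

Theorem mainTheorem10 (C : numClosedFieldType) (N : nat) (hN : (2 <= N)%N)
    (x : N.-tuple C) (y : N.-1.-tuple C) :
  (G1N x y <->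
     (forall w : C, `|w| <= 1 ->
        1 - w * x`_0 != 0 /\
        Gsym [tuple (y`_j - w * x`_(j.+1)) / (1 - w * x`_0) | j < N.-1]))
  /\ (G1N x y -> Gsym y /\ `|y`_0| < (N.-1)%:R).
Proof.
case: N hN x y => [|[|m]] // _ x y.
have hG1 : G1N x y -> Gsym y.
  move=> H.
  have [h _] := @key C m.+1 y 1 (fun z => @Q_N C m.+2 y z) (oner_neq0 _)
                  (fun z => esym (mul1r _)).
  apply: h => z hz; have := H z 0 hz; rewrite normr0 ler01 mul0r subr0.
  by move=> /(_ isT).
split; last by move=> H; split; [exact: hG1 | exact: gsym_bound (hG1 H)].
split.
- move=> H w hw.
  have c0 : 1 - w * x`_0 != 0.
    have := H 0 w; rewrite normr0 ler01 => /(_ isT hw).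
    by rewrite Q0 P0.
  split => //.
  have [h _] := @key C m.+1 _ (1 - w * x`_0)
     (fun z => @Q_N C m.+2 y z - w * P_N x z) c0 (fun z => @ident C m x y w z c0).
  by apply: h => z hz; apply: H.
- move=> H z w hz hw; have [c0 hg] := H w hw.
  have [_ h] := @key C m.+1 _ (1 - w * x`_0)
     (fun z => @Q_N C m.+2 y z - w * P_N x z) c0 (fun z => @ident C m x y w z c0).
  exact: h hg z hz.
Qed.
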